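(* The total number of distinct triples $[x,l,\sigma_l]$ over all steps $l=1,\dots,L$, i.e. $\sum_{l=1}^L|\Psi_l|$, is at most $m\binom{L-1+m}{m}$. In particular, for fixed $m$, this number (and hence the number of elementary operations of the recursive recombination algorithm, which computes $\Psi_{l+1}$ and its probabilities from $\Psi_l$ via the recursion $z=\frac{xl+\sigma_l^2}{l+1}$ for each successor state $\sigma_{l+1}$ and merges equal triples) is $O(L^m)$ as $L\to\infty$.
   Context: $\{\sigma_k\}$ is a Markov chain on $m$ states $\{u_1,\dots,u_m\}$ with fixed initial state $\sigma_0$ and transition matrix $[p_{ij}]$. A subsample path up to step $l$ is $\omega_l=(\sigma_0,\dots,\sigma_l)$ with weight $|\omega_l|=\frac1l\sum_{k=0}^{l-1}\sigma_k^2$; $\Omega_l$ is the set of such paths, and $\Psi_l=\{[|\omega_l|,l,s]:\omega_l\in\Omega_l,\ s\text{ the last element of }\omega_l\}$. *)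

(* Defs.v *)
From HB Require Import structures.
From mathcomp Require Import all_boot all_order all_algebra.
Set Implicit Arguments. Unset Strict Implicit. Unset Printing Implicit Defensive.
Import Order.TTheory GRing.Theory Num.Theory.
Local Open Scope ring_scope.

(* Markov chain on m states u_0,...,u_(m-1) (values u : 'I_m -> R),
   transition matrix P, fixed initial state sigma0.
   A subsample path up to step l is omega_l = (sigma_0,...,sigma_l),
   encoded as a finite function 'I_l.+1 -> 'I_m (state indices). *)

Definition path_of (m l : nat) := {ffun 'I_l.+1 -> 'I_m}.

Definition Omega {R : realFieldType} (m : nat) (P : 'M[R]_m) (sigma0 : 'I_m)
  (l : nat) : {set path_of m l} :=
  [set w : path_of m l | (w ord0 == sigma0) &&
     [forall k : 'I_l, 0 < P (w (inord k)) (w (inord k.+1))]].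

Definition weight {R : realFieldType} (m l : nat) (u : 'I_m -> R)
  (w : path_of m l) : R :=
  (l%:R)^-1 * \sum_(k < l) (u (w (inord k))) ^+ 2.

Definition Psi {R : realFieldType} (m : nat) (u : 'I_m -> R) (P : 'M[R]_m)
  (sigma0 : 'I_m) (l : nat) : seq (R * nat * R) :=
  undup [seq (weight u w, l, u (w (inord l))) | w in Omega P sigma0 l].

Definition total_triples {R : realFieldType} (m : nat) (u : 'I_m -> R)
  (P : 'M[R]_m) (sigma0 : 'I_m) (L : nat) : nat :=
  (\sum_(1 <= l < L.+1) size (Psi u P sigma0 l))%N.

(* Main.v *)
Require Import Defs.
From HB Require Import structures.
From mathcomp Require Import all_boot all_order all_algebra.
Import Order.TTheory GRing.Theory Num.Theory.

Lemma psi_bound (n : nat) (R : realFieldType) (u : 'I_n.+1 -> R) (P : 'M[R]_n.+1)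
  (sigma0 : 'I_n.+1) (k : nat) :
  (size (Psi u P sigma0 k.+1) <=
   #|[set t : k.-tuple 'I_n.+1 | sorted leq (map val t)]| * n.+1)%N.
Proof.
set S := [set t : k.-tuple 'I_n.+1 | sorted leq (map val t)].
pose r := fun a b : 'I_n.+1 => (val a <= val b)%N.
pose g := fun p : k.-tuple 'I_n.+1 * 'I_n.+1 =>
  (((k.+1)%:R)^-1 * (u sigma0 ^+ 2 + \sum_(x <- p.1) u x ^+ 2), k.+1, u p.2)%R.
have -> : (#|S| * n.+1 = size (map g (enum (setX S [set: 'I_n.+1]))))%N.
  by rewrite size_map -cardE cardsX cardsT card_ord.
apply: uniq_leq_size; first exact: undup_uniq.
move=> z; rewrite mem_undup => /mapP [w]; rewrite mem_enum inE => /andP [/eqP w0 _] ->.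
pose t0 : k.-tuple 'I_n.+1 := [tuple w (inord i.+1) | i < k].
apply/mapP; exists (sort_tuple r t0, w (inord k.+1)).
  rewrite mem_enum !inE /= andbT sorted_map.
  apply: sort_sorted => a b; exact: leq_total.
rewrite /g /weight /=; congr (_, _, _); congr (_ * _)%R.
rewrite big_ord_recl; congr (_ + _)%R.
  by rewrite -w0; congr ((u (w _) ^+ 2)%R); apply: val_inj; rewrite /= inordK.
rewrite (perm_big _ (permEl (perm_sort r _))) /= big_map big_enum /=. by [].
Qed.

Lemma hockey (n L : nat) :
  (\sum_(0 <= k < L) 'C(k + n, n) = 'C(L + n, n.+1))%N.
Proof.
elim: L => [|L IH]; first by rewrite big_geq // bin_small.
by rewrite big_nat_recr //= IH addSn binS addnC.
Qed.

Lemma bin_le_exp (a m : nat) : ('C(a, m) <= a ^ m)%N.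
Proof.
have h1 : ('C(a, m) <= 'C(a, m) * m`!)%N by apply: leq_pmulr; exact: fact_gt0.
apply: (leq_trans h1); rewrite bin_ffact ffact_prod.
have -> : (a ^ m = \prod_(i < m) a)%N by rewrite prod_nat_const card_ord.
by apply: leq_prod => i _; apply: leq_subr.
Qed.

Lemma part1 (m : nat) (R : realFieldType) (u : 'I_m -> R) (P : 'M[R]_m)
  (sigma0 : 'I_m) (L : nat) :
  (total_triples u P sigma0 L <= m * 'C(L.-1 + m, m))%N.
Proof.
case: m u P sigma0 => [|n] u P sigma0; first by case: sigma0.
rewrite /total_triples big_add1 /=.
apply: (@leq_trans (\sum_(0 <= k < L) n.+1 * 'C(k + n, n))).
  apply: leq_sum => k _.
  apply: (leq_trans (@psi_bound _ _ u P sigma0 k)).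
  by rewrite card_sorted_tuples -bin_sub ?leq_addr // addKn mulnC.
rewrite -big_distrr /= hockey leq_mul2l; apply/orP; right.
by apply: leq_bin2l; case: L => //= L; rewrite addnS addSn.
Qed.

Theorem proposition4 (m : nat) :
  (forall (R : realFieldType) (u : 'I_m -> R) (P : 'M[R]_m) (sigma0 : 'I_m),
     injective u ->
     (forall i j, (0 <= P i j)%R) ->
     (forall i, (\sum_(j < m) P i j)%R = 1%R) ->
     forall L : nat,
       (total_triples u P sigma0 L <= m * 'C(L.-1 + m, m))%N)
  /\
  (exists C : nat,
     forall (R : realFieldType) (u : 'I_m -> R) (P : 'M[R]_m) (sigma0 : 'I_m),
       injective u ->
       (forall i j, (0 <= P i j)%R) ->
       (forall i, (\sum_(j < m) P i j)%R = 1%R) ->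
       forall L : nat, (1 <= L)%N ->
         (total_triples u P sigma0 L <= C * L ^ m)%N).
Proof.
split; first by move=> *; apply: part1.
exists (m * m ^ m)%N => R u P sigma0 _ _ _ L L1.
apply: (leq_trans (@part1 _ _ u P sigma0 L)).
rewrite -mulnA leq_mul2l; case: m u P sigma0 => [|n] //= u P sigma0.
rewrite -expnMn; apply: (leq_trans (bin_le_exp _ _)).
rewrite leq_exp2r //.
case: L L1 => [|L] // _ /=.
by rewrite mulnS [L + _]addnC leq_add2l leq_pmull.
Qed.
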